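(* For every real $x>1$ and every $n\in\mathbb N$, $$\Phi^*_n(x)=\prod_{j=1}^n\left(x^{(j,n)_*}-1\right)^{\cos(2\pi j/n)}.$$
   Context: $d\mid\mid n$ means $d\mid n$ and $\gcd(d,n/d)=1$; $(j,n)_*=\max\{d: d\mid j,\ d\mid\mid n\}$; $\Phi^*_n(x)=\prod_{1\le j\le n,\ (j,n)_*=1}(x-e^{2\pi i j/n})$. Real powers of positive reals are the usual ones. *)

(* Defs.v *)
From Stdlib Require Import Reals Arith List.
Open Scope R_scope.

Definition C : Type := (R * R)%type.
Definition Cmul (z w : C) : C :=
  (fst z * fst w - snd z * snd w, fst z * snd w + snd z * fst w).
Definition Cone : C := (1, 0).
Definition Csub (z w : C) : C := (fst z - fst w, snd z - snd w).
Definition Cexpi (t : R) : C := (cos t, sin t).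
Definition CofR (x : R) : C := (x, 0).

Definition unitary_divb (d n : nat) : bool :=
  (Nat.eqb (n mod d) 0 && Nat.eqb (Nat.gcd d (n / d)) 1)%bool.

(* (j,n)_* = max { d : d | j, d || n }; candidates d range over 1..n
   (every unitary divisor of n >= 1 lies there). *)
Definition ugcd (j n : nat) : nat :=
  fold_right Nat.max 0%nat
    (filter (fun d => (Nat.eqb (j mod d) 0 && unitary_divb d n)%bool)
            (seq 1 n)).

Definition PhiStar (n : nat) (x : R) : C :=
  fold_right Cmul Cone
    (map (fun j => Csub (CofR x) (Cexpi (2 * PI * INR j / INR n)))
         (filter (fun j => Nat.eqb (ugcd j n) 1) (seq 1 n))).

(* Main.v *)
Require Import Defs.
Set Warnings "-notation-overridden,-ambiguous-paths,-notation-incompatible-prefix".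
From Stdlib Require Import Reals Arith List.
From mathcomp Require Import all_boot all_order all_algebra.
From mathcomp Require Import complex Rstruct zify.
From Stdlib Require Import Lia Lra.
Import Order.TTheory GRing.Theory Num.Theory.
Local Open Scope nat_scope.
Set Implicit Arguments. Unset Strict Implicit. Unset Printing Implicit Defensive.
Lemma modE a b : Nat.modulo a b = a %% b.
Proof.
case: b => [|b]; first by rewrite modn0.
symmetry; apply: (Nat.mod_unique a b.+1 (a %/ b.+1)).
- by apply/ssrnat.ltP; rewrite ltn_mod.
- rewrite {1}(divn_eq a b.+1); lia.
Qed.

Lemma divE a b : Nat.div a b = a %/ b.
Proof.
case: b => [|b]; first by rewrite divn0.
symmetry; apply: (Nat.div_unique a b.+1 (a %/ b.+1) (a %% b.+1)).
- by apply/ssrnat.ltP; rewrite ltn_mod.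
- rewrite {1}(divn_eq a b.+1); lia.
Qed.

Lemma divideP a b : Nat.divide a b <-> a %| b.
Proof.
split=> [[c ->]|/dvdnP [c ->]]; first by rewrite dvdn_mull.
by exists c.
Qed.

Lemma gcdE a b : Nat.gcd a b = gcdn a b.
Proof.
apply/eqP; rewrite eqn_dvd; apply/andP; split.
- rewrite dvdn_gcd; apply/andP; split; apply/divideP.
  + exact: Nat.gcd_divide_l. + exact: Nat.gcd_divide_r.
- apply/divideP; apply: Nat.gcd_greatest; apply/divideP.
  + exact: dvdn_gcdl. + exact: dvdn_gcdr.
Qed.

Lemma eqbE a b : Nat.eqb a b = (a == b).
Proof. by apply/idP/eqP => [/Nat.eqb_eq|/Nat.eqb_eq]. Qed.

Definition udiv d n := (d %| n) && coprime d (n %/ d).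
Definition Us n := [seq d <- iota 1 n | udiv d n].

Lemma udivb d n : unitary_divb d n = udiv d n.
Proof.
rewrite /unitary_divb /udiv !eqbE modE divE gcdE.
by rewrite -/(dvdn d n).
Qed.

Lemma seqE s n : List.seq s n = iota s n.
Proof. by elim: n s => //= n IH s; rewrite IH. Qed.

Lemma filterE T (p : pred T) l : List.filter p l = seq.filter p l.
Proof. by elim: l => //= a l ->. Qed.

Lemma mapE T U (f : T -> U) l : List.map f l = seq.map f l.
Proof. by elim: l => //= a l ->. Qed.

Lemma udiv_gt0 n d : 0 < n -> udiv d n -> 0 < d.
Proof.
move=> n0 /andP [dn _]; case: d dn => //; rewrite dvd0n => /eqP n00.
by rewrite n00 in n0.
Qed.

Lemma mem_Us n d : 0 < n -> (d \in Us n) = udiv d n.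
Proof.
move=> n0; rewrite mem_filter mem_iota.
case ud: (udiv d n) => //=.
rewrite add1n ltnS (udiv_gt0 n0 ud) /=.
by case/andP: ud => /dvdn_leq ->.
Qed.

Lemma uniq_Us n : uniq (Us n).
Proof. by rewrite filter_uniq // iota_uniq. Qed.

Lemma foldr_max_spec (s : seq nat) : s != [::] ->
  foldr maxn 0 s \in s /\ forall y, y \in s -> y <= foldr maxn 0 s.
Proof.
elim: s => // a s IH _ /=.
case: (altP (s =P [::])) => [->|sne] /=.
  by rewrite maxn0 mem_seq1 eqxx; split=> // y; rewrite mem_seq1 => /eqP ->.
case: (IH sne) => [inm ub]; split.
  by rewrite /maxn; case: ifP => _; rewrite in_cons ?eqxx ?inm ?orbT.
move=> y; rewrite in_cons => /orP [/eqP ->|ys]; first exact: leq_maxl.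
by apply: leq_trans (ub _ ys) (leq_maxr _ _).
Qed.

Lemma fold_rightE T U (f : T -> U -> U) a l : fold_right f a l = foldr f a l.
Proof. by elim: l => //= b l ->. Qed.

Lemma maxE a b : Nat.max a b = maxn a b.
Proof. lia. Qed.

Lemma ugcdE j n : ugcd j n = foldr maxn 0 [seq d <- iota 1 n | (d %| j) && udiv d n].
Proof.
rewrite /ugcd seqE filterE fold_rightE.
have -> : forall l, foldr Nat.max 0 l = foldr maxn 0 l.
  by elim=> //= a l ->; rewrite maxE.
congr foldr; apply: eq_in_filter => d; rewrite mem_iota => /andP [d1 _].
by rewrite eqbE modE udivb.
Qed.

Lemma udiv1 n : udiv 1 n.
Proof. by rewrite /udiv dvd1n coprime1n. Qed.

Lemma udivn n : 0 < n -> udiv n n.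
Proof. by move=> n0; rewrite /udiv dvdnn divnn n0 coprimen1. Qed.

Lemma udiv_dvd d n : udiv d n -> d %| n.
Proof. by case/andP. Qed.

Lemma div_dvd_div a l n : 0 < a -> a %| l -> l %| n -> (n %/ l) %| (n %/ a).
Proof.
move=> a0 /dvdnP [c ->] /dvdnP [e ->].
have c0 : 0 < c * a \/ c * a = 0 by case: (c * a) => [|?]; [right|left].
case: c0 => [ca0|->]; last by rewrite !muln0 !div0n dvdn0.
rewrite mulnK // mulnA mulnK //; exact: dvdn_mulr.
Qed.

Lemma udiv_compl d n : 0 < n -> udiv d n -> udiv (n %/ d) n.
Proof.
move=> n0 ud; have d0 := udiv_gt0 n0 ud; case/andP: ud => /dvdnP [k nE] cop.
rewrite /udiv nE mulnK // dvdn_mulr //= mulKn //.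
  by rewrite coprime_sym; move: cop; rewrite nE mulnK.
by move: n0; rewrite nE muln_gt0 => /andP [].
Qed.

Lemma udiv_lcm a b n : 0 < n -> udiv a n -> udiv b n -> udiv (lcmn a b) n.
Proof.
move=> n0 ua ub; have a0 := udiv_gt0 n0 ua; have b0 := udiv_gt0 n0 ub.
case/andP: (ua) => an ca; case/andP: (ub) => bn cb.
have ln : lcmn a b %| n by rewrite dvdn_lcm an bn.
rewrite /udiv ln /=.
apply: (@coprime_dvdl _ (a * b)).
  by rewrite dvdn_lcm dvdn_mulr //= dvdn_mull.
rewrite coprimeMl; apply/andP; split.
- apply: coprime_dvdr ca; apply: div_dvd_div => //; exact: dvdn_lcml.
- apply: coprime_dvdr cb; apply: div_dvd_div => //; exact: dvdn_lcmr.
Qed.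

Lemma ugcd_spec j n : 0 < n ->
  [/\ udiv (ugcd j n) n, ugcd j n %| j &
      forall d, udiv d n -> d %| j -> d %| ugcd j n].
Proof.
move=> n0; set s := [seq d <- iota 1 n | (d %| j) && udiv d n].
have in_s : forall d, (d \in s) = (d %| j) && udiv d n.
  move=> d; rewrite mem_filter mem_iota.
  case ud: (udiv d n); rewrite ?andbF //= andbT.
  case: (d %| j) => //=; rewrite add1n ltnS (udiv_gt0 n0 ud) /=.
  by case/andP: ud => /dvdn_leq ->.
have sne : s != [::].
  by apply/eqP => se; move: (in_s 1); rewrite se dvd1n udiv1.
case: (foldr_max_spec sne); rewrite -ugcdE => gin gub.
move: (gin); rewrite in_s => /andP [gj gu]; split => // d ud dj.
have ul := udiv_lcm n0 ud gu.
have : lcmn d (ugcd j n) \in s by rewrite in_s ul dvdn_lcm dj gj.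
move=> /gub le; have := dvdn_lcmr d (ugcd j n).
have l0 : 0 < lcmn d (ugcd j n) := udiv_gt0 n0 ul.
move=> /(dvdn_leq l0) ge.
have eq : lcmn d (ugcd j n) = ugcd j n by apply/eqP; rewrite eqn_leq le ge.
by rewrite -eq dvdn_lcml.
Qed.

Lemma ugcd_unique j n d : 0 < n -> udiv d n -> d %| j ->
  (forall D, udiv D n -> D %| j -> D %| d) -> ugcd j n = d.
Proof.
move=> n0 ud dj H; case: (ugcd_spec j n0) => gu gj gmax.
by apply/eqP; rewrite eqn_dvd (H _ gu gj) (gmax _ ud dj).
Qed.

Lemma udiv_mid d g n : 0 < n -> udiv d n -> d %| g -> g %| n -> udiv d g.
Proof.
move=> n0 ud dg gn; have d0 := udiv_gt0 n0 ud.
rewrite /udiv dg /=; case/andP: ud => _ c.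
apply: coprime_dvdr c.
case/dvdnP: gn => c2 ->; case/dvdnP: dg => c1 ->.
rewrite mulnK // mulnA mulnK //; exact: dvdn_mull.
Qed.

Lemma udiv_trans d e n : 0 < n -> udiv d e -> udiv e n -> udiv d n.
Proof.
move=> n0 ude uen; have e0 := udiv_gt0 n0 uen.
have d0 := udiv_gt0 e0 ude.
case/andP: ude => /dvdnP [c eE] cde; case/andP: uen => /dvdnP [f nE] cen.
have c0 : 0 < c by move: e0; rewrite eE muln_gt0 => /andP [].
rewrite /udiv nE eE mulnA dvdn_mull //= mulnK //.
move: cde cen; rewrite nE eE mulnK // mulnK ?muln_gt0 ?d0 ?c0 // => cdc cf.
rewrite coprimeMr cdc andbT.
by move: cf; rewrite coprimeMl => /andP [].
Qed.

Lemma udiv_quot d e n : 0 < n -> udiv d e -> udiv e n -> udiv (e %/ d) (n %/ d).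
Proof.
move=> n0 ude uen; have e0 := udiv_gt0 n0 uen.
have d0 := udiv_gt0 e0 ude.
case/andP: ude => /dvdnP [c eE] _; case/andP: uen => /dvdnP [f nE] cen.
have c0 : 0 < c by move: e0; rewrite eE muln_gt0 => /andP [].
rewrite /udiv nE eE mulnA !(mulnK _ d0) dvdn_mull //= mulnK //.
by move: cen; rewrite nE eE mulnK ?muln_gt0 ?c0 // coprimeMl => /andP [].
Qed.

Lemma udiv_mul d f n : 0 < n -> udiv d n -> udiv f (n %/ d) -> udiv (d * f) n.
Proof.
move=> n0 udn ufm; have d0 := udiv_gt0 n0 udn.
case/andP: (udn) => /dvdnP [m nE] cdm.
have m0 : 0 < m by move: n0; rewrite nE muln_gt0 => /andP [].
move: ufm cdm; rewrite nE mulnK // => ufm cdm.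
have f0 := udiv_gt0 m0 ufm.
case/andP: ufm => /dvdnP [k mE] cfk.
move: cdm cfk; rewrite mE mulnK // => cdm cfk.
rewrite /udiv [d * f]mulnC dvdn_pmul2r // dvdn_mull //= -mulnA mulnK ?muln_gt0 ?f0 ?d0 //.
rewrite coprimeMl cfk /=.
by move: cdm; rewrite coprimeMr => /andP [].
Qed.

Lemma udiv_mull d f n : 0 < n -> udiv d n -> udiv f (n %/ d) -> udiv d (d * f).
Proof.
move=> n0 udn ufm; have d0 := udiv_gt0 n0 udn.
apply: (udiv_mid n0 udn); first exact: dvdn_mulr.
exact: udiv_dvd (udiv_mul n0 udn ufm).
Qed.

Lemma ugcd_mul d k n : 0 < n -> udiv d n -> ugcd k (n %/ d) = 1 -> ugcd (d * k) n = d.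
Proof.
move=> n0 udn uk; have d0 := udiv_gt0 n0 udn.
apply: ugcd_unique => //; first exact: dvdn_mulr.
move=> D uD Ddk.
set g := lcmn D d.
have ug : udiv g n := udiv_lcm n0 uD udn.
have gn := udiv_dvd ug.
have dg : d %| g := dvdn_lcmr D d.
have udg := udiv_mid n0 udn dg gn.
have uq := udiv_quot n0 udg ug.
have q1 : g %/ d %| k.
  rewrite -(@dvdn_pmul2l d) // [d * (g %/ d)]mulnC divnK //.
  by rewrite dvdn_lcm Ddk dvdn_mulr.
have m0 : 0 < n %/ d by rewrite divn_gt0 // dvdn_leq // udiv_dvd.
case: (ugcd_spec k m0) => _ _ H.
have := H _ uq q1; rewrite uk dvdn1 => /eqP gd.
have : g = d by rewrite -(divnK dg) gd mul1n.
by move=> ge; rewrite -ge dvdn_lcml.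
Qed.

Lemma ugcd_div j n : 0 < n -> ugcd (j %/ ugcd j n) (n %/ ugcd j n) = 1.
Proof.
move=> n0; case: (ugcd_spec j n0) => ud dj H.
set d := ugcd j n in ud dj H *.
have d0 := udiv_gt0 n0 ud.
have m0 : 0 < n %/ d by rewrite divn_gt0 // dvdn_leq // udiv_dvd.
case: (ugcd_spec (j %/ d) m0) => ue ej _.
set e := ugcd _ _ in ue ej *.
have ude := udiv_mul n0 ud ue.
have : d * e %| d.
  apply: H => //; rewrite -[X in _ %| X](divnK dj) [_ * d]mulnC dvdn_pmul2l //.
by rewrite -{2}(muln1 d) dvdn_pmul2l // dvdn1 => /eqP.
Qed.

Section Bigs.
Variables (RR : Type) (idx : RR) (op : Monoid.com_law idx).

Lemma big_pick (s : seq nat) a (F : nat -> RR) : a \in s -> uniq s ->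
  \big[op/idx]_(d <- s | d == a) F d = F a.
Proof.
move=> ain us; rewrite big_mkcond (bigD1_seq a) //= eqxx.
rewrite big1 ?Monoid.mulm1 // => i /negbTE ->; done.
Qed.

Lemma ugcd_in j n : 0 < n -> ugcd j n \in Us n.
Proof. by move=> n0; rewrite mem_Us //; case: (ugcd_spec j n0). Qed.

Lemma fiber_perm n d : 0 < n -> udiv d n ->
  perm_eq [seq j <- iota 1 n | d == ugcd j n]
          [seq d * k | k <- [seq k <- iota 1 (n %/ d) | ugcd k (n %/ d) == 1]].
Proof.
move=> n0 ud; have d0 := udiv_gt0 n0 ud; have dn := udiv_dvd ud.
apply: uniq_perm.
- by rewrite filter_uniq // iota_uniq.
- rewrite map_inj_in_uniq; first by rewrite filter_uniq // iota_uniq.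
  by move=> a b _ _ /eqP; rewrite eqn_pmul2l // => /eqP.
move=> j; rewrite mem_filter mem_iota add1n ltnS.
apply/idP/mapP.
- case/andP => /eqP dE /andP [j1 jn].
  case: (ugcd_spec j n0); rewrite -dE => _ dj _.
  exists (j %/ d); last by rewrite mulnC divnK.
  rewrite mem_filter mem_iota add1n ltnS leq_div2r // andbT.
  rewrite dE ugcd_div // eqxx /= -dE divn_gt0 //.
  exact: dvdn_leq.
- case=> k; rewrite mem_filter mem_iota add1n ltnS => /andP [/eqP uk /andP [k1 km]] ->.
  rewrite ugcd_mul // eqxx /= muln_gt0 d0 k1 /=.
  by rewrite -(divnK dn) [n %/ d * d]mulnC leq_pmul2l.
Qed.

Lemma big_partition n (F : nat -> RR) : 0 < n ->
  \big[op/idx]_(j <- iota 1 n) F j =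
  \big[op/idx]_(d <- Us n) \big[op/idx]_(k <- iota 1 (n %/ d) | ugcd k (n %/ d) == 1) F (d * k).
Proof.
move=> n0.
transitivity (\big[op/idx]_(j <- iota 1 n) \big[op/idx]_(d <- Us n)
                 (if d == ugcd j n then F j else idx)).
  apply: eq_big_seq => j _; rewrite -big_mkcond big_pick //.
  - exact: ugcd_in.
  - exact: uniq_Us.
rewrite exchange_big; apply: eq_big_seq => d; rewrite mem_Us // => ud.
rewrite -big_mkcond -big_filter (perm_big _ (fiber_perm n0 ud)) big_map big_filter.
done.
Qed.

Lemma Us_sub n e : 0 < n -> udiv e n ->
  perm_eq (Us e) [seq d <- Us n | d %| e].
Proof.
move=> n0 ue; have e0 := udiv_gt0 n0 ue.
apply: uniq_perm; [exact: uniq_Us| by rewrite filter_uniq // uniq_Us|].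
move=> d; rewrite (mem_Us d e0) mem_filter (mem_Us d n0).
apply/idP/andP.
- move=> ude; split; [exact: udiv_dvd | exact: udiv_trans ude ue].
- case=> de udn; exact: udiv_mid n0 udn de (udiv_dvd ue).
Qed.

Lemma Us_mul_perm n d : 0 < n -> udiv d n ->
  perm_eq [seq d * f | f <- Us (n %/ d)] [seq e <- Us n | d %| e].
Proof.
move=> n0 ud; have d0 := udiv_gt0 n0 ud; have dn := udiv_dvd ud.
have m0 : 0 < n %/ d by rewrite divn_gt0 // dvdn_leq.
apply: uniq_perm.
- rewrite map_inj_in_uniq; first exact: uniq_Us.
  by move=> a b _ _ /eqP; rewrite eqn_pmul2l // => /eqP.
- by rewrite filter_uniq // uniq_Us.
move=> e; rewrite mem_filter (mem_Us e n0); apply/mapP/andP.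
- case=> f; rewrite mem_Us // => uf ->; split; first exact: dvdn_mulr.
  exact: udiv_mul.
- case=> de ue; exists (e %/ d); last by rewrite mulnC divnK.
  rewrite mem_Us //; apply: (udiv_quot n0 _ ue).
  exact: udiv_mid n0 ud de (udiv_dvd ue).
Qed.

Lemma big_chain n (G : nat -> nat -> RR) : 0 < n ->
  \big[op/idx]_(e <- Us n) \big[op/idx]_(d <- Us e) G d (e %/ d) =
  \big[op/idx]_(d <- Us n) \big[op/idx]_(f <- Us (n %/ d)) G d f.
Proof.
move=> n0.
transitivity (\big[op/idx]_(e <- Us n) \big[op/idx]_(d <- Us n)
                 (if d %| e then G d (e %/ d) else idx)).
  apply: eq_big_seq => e; rewrite mem_Us // => ue.
  by rewrite (perm_big _ (Us_sub n0 ue)) big_filter big_mkcond.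
rewrite exchange_big; apply: eq_big_seq => d; rewrite mem_Us // => ud.
have d0 := udiv_gt0 n0 ud.
rewrite -big_mkcond -big_filter.
rewrite -(perm_big _ (Us_mul_perm n0 ud)) big_map.
by apply: eq_big_seq => f _; rewrite mulKn.
Qed.

Lemma divn_compl n d : 0 < n -> udiv d n -> n %/ (n %/ d) = d.
Proof. by move=> n0 ud; rewrite divnA ?udiv_dvd // mulKn. Qed.

Lemma big_compl n (G : nat -> RR) : 0 < n ->
  \big[op/idx]_(d <- Us n) G (n %/ d) = \big[op/idx]_(d <- Us n) G d.
Proof.
move=> n0; rewrite -(big_map (fun d => n %/ d) xpredT G).
apply: perm_big; apply: uniq_perm.
- rewrite map_inj_in_uniq; first exact: uniq_Us.
  move=> a b; rewrite !mem_Us // => ua ub ab.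
  by rewrite -(divn_compl n0 ua) ab divn_compl.
- exact: uniq_Us.
move=> e; apply/mapP/idP.
- by case=> d; rewrite !mem_Us // => ud ->; exact: udiv_compl.
- rewrite mem_Us // => ue; exists (n %/ e); first by rewrite mem_Us // udiv_compl.
  by rewrite divn_compl.
Qed.

End Bigs.

Section RealPart.
Local Open Scope R_scope.

Lemma cos_neq1 t : 0 < t -> t < 2 * PI -> cos t <> 1.
Proof.
move=> t0 t2 c1.
have h : 0 < sin (t / 2) by apply: sin_gt_0; lra.
have := cos_2a_sin (t / 2); have -> : 2 * (t / 2) = t by field.
rewrite c1 => e; nra.
Qed.

Definition ang (j m : nat) : R := 2 * PI * INR j / INR m.

Lemma ang_bounds k m : (0 < k)%N -> (k < m)%N -> 0 < ang k m /\ ang k m < 2 * PI.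
Proof.
move=> k0 km.
have hk : 0 < INR k by apply: lt_0_INR; apply/ssrnat.ltP.
have hkm : INR k < INR m by apply: lt_INR; apply/ssrnat.ltP.
have hp := PI_RGT_0.
have hm : 0 < INR m by lra.
rewrite /ang; split.
- apply: Rdiv_lt_0_compat => //; nra.
- apply/(Rmult_lt_reg_r (INR m)) => //; field_simplify; nra.
Qed.

Lemma angmm m : (0 < m)%N -> ang m m = 2 * PI.
Proof.
move=> m0; have hm : 0 < INR m by apply: lt_0_INR; apply/ssrnat.ltP.
rewrite /ang; field; lra.
Qed.

Lemma ang_mul d k n : (0 < n)%N -> (d %| n)%N -> ang (d * k) n = ang k (n %/ d).
Proof.
move=> n0 dn.
have d0 : (0 < d)%N by case: d dn n0 => //; rewrite dvd0n => /eqP ->.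
rewrite /ang -{1}(divnK dn) !mult_INR.
have hd : 0 < INR d by apply: lt_0_INR; apply/ssrnat.ltP.
have hm : 0 < INR (n %/ d) by apply: lt_0_INR; apply/ssrnat.ltP; rewrite divn_gt0 // dvdn_leq.
field; lra.
Qed.

End RealPart.

Local Open Scope ring_scope.

Definition om (t : R) : R[i] := Complex (cos t) (sin t).

Lemma om_add a b : om a * om b = om (a + b).
Proof.
rewrite /om /GRing.mul /=; congr Complex.
- by rewrite cos_plus.
- by rewrite sin_plus /= addrC.
Qed.

Lemma om0 : om 0 = 1.
Proof. by rewrite /om cos_0 sin_0. Qed.

Lemma om_pow t k : om t ^+ k = om (Rmult (INR k) t).
Proof.
elim: k => [|k IH]; first by rewrite expr0 /= Rmult_0_l om0.
by rewrite exprS IH om_add S_INR; congr om; rewrite /=; lra.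
Qed.

Lemma om_neq1 t : Rlt 0 t -> Rlt t (2 * PI)%R -> om t != 1.
Proof.
move=> t0 t2; apply/eqP => /(congr1 (@complex.Re R)) /= c1.
exact: cos_neq1 t0 t2 c1.
Qed.

Lemma om_angmm m : (0 < m)%N -> om (ang m m) = 1.
Proof. by move=> m0; rewrite angmm // /om cos_2PI sin_2PI. Qed.

Lemma om_ang_neq1 k m : (0 < k)%N -> (k < m)%N -> om (ang k m) != 1.
Proof. by move=> k0 km; case: (ang_bounds k0 km) => h1 h2; exact: om_neq1. Qed.

Definition zeta m := om (ang 1 m).

Lemma zeta_pow m k : zeta m ^+ k = om (ang k m).
Proof. by rewrite om_pow /ang; congr om; rewrite /= Rmult_1_r; unfold Rdiv; ring. Qed.

Lemma zeta_prim m : (0 < m)%N -> m.-primitive_root (zeta m).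
Proof.
move=> m0; rewrite /primitive_root_of_unity m0 /=; apply/forallP => i.
rewrite unity_rootE zeta_pow.
case: (eqVneq i.+1 m) => [->|ne]; first by rewrite om_angmm // !eqxx.
have lt : (i.+1 < m)%N by rewrite ltn_neqAle ne ltn_ord.
by rewrite (negbTE (om_ang_neq1 (ltn0Sn i) lt)).
Qed.

Lemma big_shift (RR : Type) (idx : RR) (op : Monoid.com_law idx) (F : nat -> RR) m :
  (0 < m)%N -> F m = F 0%N ->
  \big[op/idx]_(0 <= i < m) F i = \big[op/idx]_(j <- iota 1 m) F j.
Proof.
case: m => // m _ Fm.
have -> : iota 1 m.+1 = rcons (iota 1 m) m.+1 by rewrite -cats1 -{1}(addn1 m) iotaD.
have -> : index_iota 0 m.+1 = 0%N :: iota 1 m by rewrite /index_iota subn0.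
by rewrite big_cons big_rcons Fm Monoid.mulmC.
Qed.

Lemma prod_xn (x : R[i]) m : (0 < m)%N ->
  \prod_(j <- iota 1 m) (x - om (ang j m)) = x ^+ m - 1.
Proof.
move=> m0; have := congr1 (fun p => p.[x]) (factor_Xn_sub_1 (zeta_prim m0)).
rewrite horner_prod /= => E.
rewrite -big_shift //; last by rewrite om_angmm // /ang /= Rmult_0_r /Rdiv Rmult_0_l om0.
rewrite (eq_bigr (fun i => ('X - (zeta m ^+ i)%:P).[x])); last first.
  by move=> i _; rewrite hornerXsubC zeta_pow.
by rewrite E !hornerE.
Qed.

Lemma sum_om m : (0 < m)%N -> \sum_(j <- iota 1 m) om (ang j m) = (m == 1)%:R.
Proof.
move=> m0; case: (eqVneq m 1) => [->|ne].
  by rewrite /= big_cons big_nil addr0 om_angmm.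
have m1 : (1 < m)%N by rewrite ltn_neqAle eq_sym ne m0.
rewrite -big_shift //; last by rewrite om_angmm // /ang /= Rmult_0_r /Rdiv Rmult_0_l om0.
rewrite (eq_bigr (fun i => zeta m ^+ i)); last by move=> i _; rewrite zeta_pow.
have := subrX1 (zeta m) m; rewrite prim_expr_order ?zeta_prim // subrr.
move=> /esym /eqP; rewrite mulf_eq0 subr_eq0 (negbTE (om_ang_neq1 (ltnSn 0) m1)) /=.
by rewrite big_mkord => /eqP.
Qed.

Lemma Re_sum (s : seq nat) (F : nat -> R[i]) :
  complex.Re (\sum_(i <- s) F i) = \sum_(i <- s) complex.Re (F i).
Proof.
elim: s => [|a s IH]; first by rewrite !big_nil.
by rewrite !big_cons -IH; case: (F a); case: (\sum_(j <- s) F j).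
Qed.

Lemma sum_cos m : (0 < m)%N -> \sum_(j <- iota 1 m) cos (ang j m) = (m == 1)%:R.
Proof.
move=> m0; have := congr1 (@complex.Re R) (sum_om m0).
by rewrite Re_sum /=; case: (m == 1).
Qed.

Section RDefs.
Local Open Scope R_scope.
Definition Lg (x : R) (d : nat) : R := ln (x ^ d - 1).
Lemma Lg_pos_arg x d : 1 < x -> (0 < d)%N -> 0 < x ^ d - 1.
Proof.
move=> hx d0.
have : 1 < x ^ d.
  apply: Rlt_pow_R1 => //; exact/ssrnat.ltP.
move=> h; lra.
Qed.
End RDefs.

Local Open Scope complex_scope.
Local Open Scope ring_scope.

Definition Pp (x : R) (n : nat) : R[i] :=
  \prod_(j <- iota 1 n | ugcd j n == 1%N) (x%:C - om (ang j n)).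
Definition Ss (x : R) (e : nat) : R :=
  \sum_(j <- iota 1 e) cos (ang j e) * Lg x (ugcd j e).
Definition Cc (m : nat) : R := \sum_(k <- iota 1 m | ugcd k m == 1%N) cos (ang k m).

Lemma LHSrec x n : (0 < n)%N -> \prod_(e <- Us n) Pp x e = x%:C ^+ n - 1.
Proof.
move=> n0; rewrite -(big_compl _ (Pp x) n0) -prod_xn // (big_partition _ _ n0).
apply: eq_big_seq => d; rewrite mem_Us // => ud.
rewrite /Pp; apply: eq_bigr => k _.
by rewrite ang_mul // udiv_dvd.
Qed.

Lemma sumCc m : (0 < m)%N -> \sum_(f <- Us m) Cc f = (m == 1%N)%:R.
Proof.
move=> m0; rewrite -(big_compl _ Cc m0) -sum_cos // (big_partition _ _ m0).
apply: eq_big_seq => d; rewrite mem_Us // => ud.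
rewrite /Cc; apply: eq_bigr => k _.
by rewrite ang_mul // udiv_dvd.
Qed.

Lemma Ss_split x e : (0 < e)%N ->
  Ss x e = \sum_(d <- Us e) Lg x d * Cc (e %/ d).
Proof.
move=> e0; rewrite /Ss (big_partition _ _ e0).
apply: eq_big_seq => d; rewrite mem_Us // => ud.
rewrite /Cc mulr_sumr; apply: eq_bigr => k /eqP uk.
by rewrite ang_mul ?udiv_dvd // ugcd_mul // mulrC.
Qed.

Lemma RHSrec x n : (0 < n)%N -> \sum_(e <- Us n) Ss x e = Lg x n.
Proof.
move=> n0.
transitivity (\sum_(e <- Us n) \sum_(d <- Us e) Lg x d * Cc (e %/ d)).
  apply: eq_big_seq => e; rewrite mem_Us // => ue.
  by rewrite Ss_split // (udiv_gt0 n0 ue).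
rewrite (big_chain _ (fun d f => Lg x d * Cc f) n0).
transitivity (\sum_(d <- Us n | d == n) Lg x d); last first.
  by rewrite big_pick // ?mem_Us ?udivn // uniq_Us.
rewrite [RHS]big_mkcond; apply: eq_big_seq => d; rewrite mem_Us // => ud.
have d0 := udiv_gt0 n0 ud.
have m0 : (0 < n %/ d)%N by rewrite divn_gt0 // dvdn_leq // udiv_dvd.
rewrite -mulr_sumr sumCc //.
have -> : (n %/ d == 1)%N = (d == n).
  apply/eqP/eqP => [h|->]; last by rewrite divnn n0.
  by rewrite -(divn_compl n0 ud) h divn1.
by case: (d == n); rewrite ?mulr1 ?mulr0.
Qed.

Definition Rr (x : R) (e : nat) : R := exp (Ss x e).

Lemma exp_sum (s : seq nat) (P : pred nat) (F : nat -> R) :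
  exp (\sum_(i <- s | P i) F i) = \prod_(i <- s | P i) exp (F i).
Proof.
elim: s => [|a s IH]; first by rewrite !big_nil exp_0.
by rewrite !big_cons; case: (P a); rewrite ?exp_plus IH.
Qed.

Lemma C_mul (a b : R) : (a * b)%:C = a%:C * b%:C :> R[i].
Proof. by rewrite /GRing.mul /= !mulr0 !mul0r subr0 addr0. Qed.

Lemma C_prod (s : seq nat) (P : pred nat) (F : nat -> R) :
  \prod_(i <- s | P i) (F i)%:C = (\prod_(i <- s | P i) F i)%:C :> R[i].
Proof.
elim: s => [|a s IH]; first by rewrite !big_nil.
by rewrite !big_cons; case: (P a); rewrite ?IH ?C_mul.
Qed.

Lemma C_pow (a : R) n : a%:C ^+ n = (a ^+ n)%:C :> R[i].
Proof.
elim: n => [|n IH]; first by rewrite !expr0.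
by rewrite !exprS IH C_mul.
Qed.

Lemma C_neq0 (a : R) : a <> 0%R -> a%:C != 0 :> R[i].
Proof. by move=> a0; apply/eqP => /(congr1 (@complex.Re R)) /=. Qed.

Lemma RHSprod x n : Rlt 1 x -> (0 < n)%N ->
  \prod_(e <- Us n) (Rr x e)%:C = x%:C ^+ n - 1.
Proof.
move=> hx n0; rewrite C_prod -exp_sum RHSrec // /Lg exp_ln; last exact: Lg_pos_arg.
rewrite C_pow RpowE.
by rewrite /GRing.add /GRing.opp /=; congr Complex; rewrite ?subrr.
Qed.

Lemma main_eq x n : Rlt 1 x -> Pp x n = (Rr x n)%:C.
Proof.
move=> hx; elim/ltn_ind: n => n IH.
case: (posnP n) => [->|n0].
  by rewrite /Pp /Rr /Ss /= !big_nil exp_0.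
have E : \prod_(e <- Us n) Pp x e = \prod_(e <- Us n) (Rr x e)%:C.
  by rewrite LHSrec // RHSprod.
have nin : n \in Us n by rewrite mem_Us // udivn.
rewrite !(bigD1_seq n nin (uniq_Us n)) /= in E.
have Q : \prod_(e <- Us n | e != n) Pp x e = \prod_(e <- Us n | e != n) (Rr x e)%:C.
  rewrite big_seq_cond [RHS]big_seq_cond; apply: eq_bigr => e /andP [].
  rewrite mem_Us // => ue ne; apply: IH.
  by rewrite ltn_neqAle ne dvdn_leq // udiv_dvd.
rewrite Q in E; apply: (mulIf _ E).
rewrite C_prod; apply: C_neq0.
rewrite /Rr -exp_sum; apply: Rgt_not_eq; exact: exp_pos.
Qed.

Definition toC (z : Defs.C) : R[i] := Complex z.1 z.2.

Lemma toC_inj a b : toC a = toC b -> a = b.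
Proof. by case: a => a1 a2; case: b => b1 b2; rewrite /toC /= => [[-> ->]]. Qed.

Lemma toC_mul a b : toC (Cmul a b) = toC a * toC b.
Proof. by case: a => a1 a2; case: b => b1 b2. Qed.

Lemma toC_fold (l : list Defs.C) :
  toC (fold_right Cmul Cone l) = \prod_(z <- l) toC z.
Proof.
elim: l => [|a l IH]; first by rewrite big_nil.
by rewrite big_cons /= toC_mul IH.
Qed.

Lemma PhiStarE n x : toC (PhiStar n x) = Pp x n.
Proof.
rewrite /PhiStar toC_fold mapE filterE seqE big_map big_filter /Pp.
apply: eq_big => [j|j _]; first by rewrite eqbE.
done.
Qed.

Lemma fold_prod (g : nat -> R) (s : seq nat) :
  fold_right Rmult 1%R (List.map g s) = \prod_(j <- s) g j.
Proof.
elim: s => [|a s IH]; first by rewrite big_nil.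
by rewrite big_cons /= IH.
Qed.

Theorem theorem4p5' (x : R) (n : nat) (hx : Rlt 1 x) :
  PhiStar n x = CofR (Rr x n).
Proof.
by apply: toC_inj; rewrite PhiStarE main_eq.
Qed.


Local Open Scope R_scope.

Lemma RrE (x : R) (n : nat) :
  fold_right Rmult 1
    (List.map (fun j => Rpower (x ^ (ugcd j n) - 1) (cos (2 * PI * INR j / INR n)))
       (List.seq 1 n)) = Rr x n.
Proof.
rewrite fold_prod seqE /Rr /Ss exp_sum.
apply: eq_bigr => j _.
by rewrite /Rpower /Lg /ang.
Qed.

Theorem theorem4p5 (x : R) (n : nat) (hx : 1 < x) :
  PhiStar n x =
  CofR (fold_right Rmult 1
          (List.map (fun j => Rpower (x ^ (ugcd j n) - 1) (cos (2 * PI * INR j / INR n)))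
               (List.seq 1 n))).
Proof. by rewrite RrE; apply: theorem4p5'. Qed.
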